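(* Let $\mathcal T$ be an $n$-leaf tree with $n\ge 3$ and nonnegative edge weights, and let $v_{\mathcal T}$ be its tree game. - If all internal edge weights are zero, then the core of $(N,v_{\mathcal T})$ consists of the single vector $\vec\ell=(\alpha_1,\dots,\alpha_n)$ of leaf weights. - Otherwise (some internal edge has positive weight), the core is empty.
   Context: An $n$-leaf tree here is an unrooted tree whose leaves are labeled by $N=\{1,\dots,n\}$ and whose internal vertices all have degree 3. The edge incident to leaf $i$ is the leaf edge $i$, with weight $\alpha_i$. The remaining $n-3$ edges are internal edges. All edge weights are real numbers $\ge 0$. The tree game $v_{\mathcal T}$ assigns to each $S\subseteq N$ the sum of the weights of the edges of the minimal subtree spanning the leaves in $S$. In particular $v_{\mathcal T}(\emptyset)=0$ and $v_{\mathcal T}(\{i\})=0$. The core of a cooperative game $(N,v)$ is the set of vectors $x\in\mathbb R^n$ with $\sum_{i\in S}x_i\ge v(S)$ for all $S\subseteq N$ and $\sum_{i\in N}x_i=v(N)$. *)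

(* Defs.v *)
From HB Require Import structures.
From mathcomp Require Import all_boot all_order all_algebra.
Set Implicit Arguments. Unset Strict Implicit. Unset Printing Implicit Defensive.
Import Order.TTheory GRing.Theory Num.Theory.
Local Open Scope ring_scope.

Section TreeGame.
Variable V : finType.
Variable e : rel V.

Definition edges : {set {set V}} := [set [set p.1; p.2] | p in [set q : V * V | e q.1 q.2]].

Definition connected_on (U : {set V}) : bool :=
  [forall x in U, forall y in U,
     connect [rel a b | [&& e a b, a \in U & b \in U]] x y].

Definition is_tree : Prop :=
  [/\ symmetric e, irreflexive e, connected_on setT & #|edges| = (#|V| - 1)%N].

Definition deg (x : V) : nat := #|[set y | e x y]|.

Definition leaf_tree (n : nat) (l : 'I_n -> V) : Prop :=
  [/\ is_tree, injective l, (forall i, deg (l i) = 1%N)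
    & (forall x, x \notin codom l -> deg x = 3%N)].

Variables (n : nat) (l : 'I_n -> V).

Definition leaf_edge (E : {set V}) : bool := (E \in edges) && [exists i, l i \in E].
Definition internal_edge (E : {set V}) : bool := (E \in edges) && [forall i, l i \notin E].

Definition spans (S : {set 'I_n}) (U : {set V}) : bool :=
  ([set l i | i in S] \subset U) && connected_on U.

Definition min_span (S : {set 'I_n}) (U : {set V}) : bool :=
  spans S U && [forall U' : {set V}, spans S U' ==> (U \subset U')].

Variable R : numDomainType.
Variable wt : {set V} -> R.

Definition tree_game (S : {set 'I_n}) : R :=
  match [pick U | min_span S U] with
  | Some U => \sum_(E in edges | E \subset U) wt E
  | None => 0
  end.

(* alpha_i : weight of the leaf edge at leaf i (the unique edge containing l i) *)
Definition leaf_weight (i : 'I_n) : R := \sum_(E in edges | l i \in E) wt E.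

End TreeGame.

Definition in_core (R : numDomainType) (n : nat) (v : {set 'I_n} -> R)
  (x : 'I_n -> R) : Prop :=
  (forall S : {set 'I_n}, v S <= \sum_(i in S) x i) /\
  \sum_(i < n) x i = v setT.

(* Main.v *)
Require Import Defs.
From HB Require Import structures.
From mathcomp Require Import all_boot all_order all_algebra.
From mathcomp Require Import zify ring lra.
Import Order.TTheory GRing.Theory Num.Theory.

Module TreeAux.
Set Implicit Arguments. Unset Strict Implicit.

Section Graph.
Variable V : finType.
Variable e : rel V.
Hypothesis esym : symmetric e.
Hypothesis eirr : irreflexive e.

Definition crossP (U : {set V}) : Prop :=
  forall Y : {set V}, Y \subset U -> forall y z, y \in Y -> z \in U -> z \notin Y ->
  exists a b, [/\ a \in Y, b \in U, b \notin Y & e a b].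

Definition relIn (U : {set V}) := [rel a b | [&& e a b, a \in U & b \in U]].

Lemma conn_cross U : connected_on e U -> crossP U.
Proof.
move=> /forallP cU Y sYU y z yY zU zY.
have yU : y \in U by apply: (subsetP sYU).
have := forallP (implyP (cU y) yU) z; move=> /implyP /(_ zU) Hc.
case: (boolP [exists a, exists b, [&& a \in Y, b \in U, b \notin Y & e a b]]).
  by move=> /existsP [a /existsP [b /and4P [? ? ? ?]]]; exists a, b.
move=> H.
have Hcl : closed (relIn U) Y.
  move=> a b /= /and3P [eab aU bU]; apply/idP/idP => [aY|bY].
  - apply/negPn/negP => bY; move/negP: H; apply; apply/existsP; exists a;
    apply/existsP; exists b; by rewrite aY bU bY eab.
  - apply/negPn/negP => aY; move/negP: H; apply; apply/existsP; exists b;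
    apply/existsP; exists a; by rewrite aY aU bY esym eab.
by have := closed_connect Hcl Hc; rewrite yY (negbTE zY).
Qed.

Lemma cross_conn U : crossP U -> connected_on e U.
Proof.
move=> cU; apply/forallP => x; apply/implyP => xU; apply/forallP => y; apply/implyP => yU.
set Y := [set t in U | connect (relIn U) x t].
have sYU : Y \subset U by apply/subsetP => t; rewrite inE => /andP [].
have xY : x \in Y by rewrite inE xU connect0.
apply/negPn/negP => nc.
have yY : y \notin Y by rewrite inE yU /=.
have [a [b [aY bU bY eab]]] := cU Y sYU x y xY yU yY.
move: aY bY; rewrite !inE bU /= => /andP [aU ca]; apply/negP/negPn.
apply: connect_trans ca (connect1 _); by rewrite /= eab aU bU.
Qed.

Definition arcs (X : {set V}) := [set p : V * V | (p.1 \in X) && ((p.2 \in X) && e p.1 p.2)].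

Lemma arcs_sub (X Y : {set V}) : X \subset Y -> arcs X \subset arcs Y.
Proof.
move=> sXY; apply/subsetP => p; rewrite !inE => /and3P [h1 h2 h3].
by rewrite (subsetP sXY _ h1) (subsetP sXY _ h2).
Qed.

Lemma lower_grow (X : {set V}) : crossP X -> forall k, (0 < k <= #|X|)%N ->
  exists2 Y : {set V}, Y \subset X & (#|Y| = k /\ (2 * (k - 1) <= #|arcs Y|)%N).
Proof.
move=> cX; elim=> [//|k IH] /andP [_ hk].
case: k IH hk => [_|k] hk.
  have /card_gt0P [x xX] : (0 < #|X|)%N by [].
  exists [set x]; first by rewrite sub1set.
  by rewrite cards1.
move=> hk2.
have [Y sYX [cY hY]] : exists2 Y : {set V}, Y \subset X & (#|Y| = k.+1 /\ (2 * (k.+1 - 1) <= #|arcs Y|)%N).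
  apply: hk => //; rewrite ltnS /=; exact: ltnW.
have /card_gt0P [y yY] : (0 < #|Y|)%N by rewrite cY.
have : ~~ (X \subset Y).
  apply/negP => sXY; have := subset_leq_card sXY; rewrite cY => h2; have := leq_trans hk2 h2; by rewrite ltnn.
move=> /subsetPn [z zX zY].
have [a [b [aY bX bY eab]]] := cX Y sYX y z yY zX zY.
exists (b |: Y); first by rewrite subUset sub1set bX sYX.
split; first by rewrite cardsU1 bY cY.
have ab : a != b by apply/eqP => Eab; rewrite Eab in aY; rewrite aY in bY.
have sub : (a, b) |: ((b, a) |: arcs Y) \subset arcs (b |: Y).
  apply/subsetP => p; rewrite !inE => /or3P [/eqP -> | /eqP -> | /and3P [h1 h2 h3]] /=.
  - by rewrite eqxx aY orbT eab.
  - by rewrite eqxx aY orbT esym eab.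
  - by rewrite h1 h2 h3 !orbT.
have n2 : (b, a) \notin arcs Y by rewrite inE /= (negbTE bY).
have n1 : (a, b) \notin (b, a) |: arcs Y.
  rewrite in_setU1 negb_or; apply/andP; split.
    by apply/eqP => -[Eab _]; rewrite Eab eqxx in ab.
  by rewrite inE /= (negbTE bY) andbF.
have := subset_leq_card sub.
rewrite cardsU1 n1 cardsU1 n2 !add1n => h2; apply: leq_trans h2; move: hY; lia.
Qed.

Lemma lower (X : {set V}) : crossP X -> (0 < #|X|)%N -> (2 * (#|X| - 1) <= #|arcs X|)%N.
Proof.
move=> cX hX.
have [Y sYX [cY hY]] := @lower_grow X cX (#|X|) (introT andP (conj hX (leqnn _))).
have := subset_leq_card (arcs_sub sYX); move: hY; lia.
Qed.


Lemma card_pairs (X : {set V}) (Q : V -> V -> bool) :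
  #|[set p : V * V | (p.1 \in X) && Q p.1 p.2]| = (\sum_(v in X) #|[set y | Q v y]|)%N.
Proof.
rewrite -sum1_card (eq_bigl (fun p : V * V => (p.1 \in X) && Q p.1 p.2)); last first.
  by move=> p; rewrite inE.
rewrite -(pair_big_dep (fun v => v \in X) Q (fun _ _ => 1%N)).
apply: eq_bigr => v _; rewrite -sum1_card; apply: eq_bigl => y; by rewrite inE.
Qed.

Lemma degsum (X : {set V}) :
  (\sum_(v in X) deg e v)%N = (#|arcs X| + #|[set p : V * V | (p.1 \in X) && ((p.2 \notin X) && e p.1 p.2)]|)%N.
Proof.
rewrite /arcs (card_pairs X (fun v y => (y \in X) && e v y)) (card_pairs X (fun v y => (y \notin X) && e v y)) -big_split /=; apply: eq_bigr => v _.
rewrite /deg -(cardsID X [set y | e v y]); congr (_ + _)%N; apply: eq_card => y;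
by rewrite !inE andbC.
Qed.


End Graph.


Section G2.
Variable V : finType.
Variable e : rel V.
Hypothesis esym : symmetric e.
Hypothesis eirr : irreflexive e.

Lemma arcs_edges : (#|arcs e setT| <= 2 * #|edges e|)%N.
Proof.
rewrite -sum1_card (partition_big (fun p : V * V => [set p.1; p.2]) (fun E => E \in edges e)) /=; last first.
  move=> p; rewrite !inE /= => he; apply/imsetP; by exists p; rewrite ?inE.
rewrite mulnC -sum_nat_const; apply: leq_sum => E /imsetP [q] _ ->.
rewrite sum1dep_card.
apply: (@leq_trans #|[set (q.1, q.2); (q.2, q.1)]|); last by rewrite cards2 ltnS leq_b1.
apply: subset_leq_card; apply/subsetP => p; rewrite !inE /= => /andP [he /eqP Hs].
have ne : p.1 != p.2 by apply/eqP => E'; move: he; rewrite E' eirr.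
have h1 : p.1 \in [set q.1; q.2] by rewrite -Hs !inE eqxx.
have h2 : p.2 \in [set q.1; q.2] by rewrite -Hs !inE eqxx orbT.
case: p ne h1 h2 {he Hs} => [p1 p2] /= ne.
move=> /set2P [E1|E1] /set2P [E2|E2]; subst p1 p2; rewrite ?eqxx ?orbT //; by rewrite eqxx in ne.
Qed.

Variable n : nat.
Variable l : 'I_n -> V.
Hypothesis connT : connected_on e setT.
Hypothesis cardE : #|edges e| = (#|V| - 1)%N.
Hypothesis linj : injective l.
Hypothesis degl : forall i, deg e (l i) = 1%N.
Hypothesis degI : forall x, x \notin codom l -> deg e x = 3%N.
Hypothesis n3 : (3 <= n)%N.

Lemma crossT : crossP e setT.
Proof. exact: conn_cross. Qed.

Lemma other (i : 'I_n) : exists j, j != i.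
Proof.
have : (0 < #|[set~ i]|)%N by rewrite cardsC1 card_ord; lia.
by move=> /card_gt0P [j]; rewrite !inE => ?; exists j.
Qed.

Lemma keyK (U : {set V}) (i : 'I_n) (w : V) : connected_on e U ->
  (forall j, j != i -> l j \in U) -> w \notin U -> w != l i -> False.
Proof.
move=> cU0 hU wU wi.
have cU := conn_cross esym cU0.
have [j0 j0i] := other i.
have u0U := hU j0 j0i.
set K := [set t in ~: U | connect (relIn e (~: U)) w t].
have Kcl : forall a b, a \in K -> b \notin U -> e a b -> b \in K.
  move=> a b; rewrite !inE => /andP [aU ca] bU eab; rewrite bU /=.
  apply: connect_trans ca (connect1 _); by rewrite /= eab !inE aU bU.
have wK : w \in K by rewrite !inE wU connect0.
have KU : forall v, v \in K -> v \notin U by move=> v; rewrite !inE => /andP [].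
clearbody K.
have u0K : l j0 \in ~: K by rewrite inE; apply/negP => /KU; rewrite u0U.
have cK : crossP e (~: K).
  move=> Y sY y z yY zK zY.
  case: (boolP [exists u1, (u1 \in U) && (u1 \in Y)]) => [/existsP [u1 /andP [u1U u1Y]]|nUY].
  - case: (boolP [exists u2, (u2 \in U) && (u2 \notin Y)]) => [/existsP [u2 /andP [u2U u2Y]]|nUY2].
    + have sYU : Y :&: U \subset U by apply: subsetIr.
      have h1 : u1 \in Y :&: U by rewrite inE u1Y u1U.
      have h2 : u2 \notin Y :&: U by rewrite inE (negbTE u2Y).
      have [a [b [aYU bU bYU eab]]] := cU _ sYU u1 u2 h1 u2U h2.
      exists a, b; split => //.
      * by move: aYU; rewrite inE => /andP [].
      * by rewrite inE; apply/negP => /KU; rewrite bU.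
      * by move: bYU; rewrite inE bU andbT.
    +
      have UY : forall u, u \in U -> u \in Y.
        move=> u uU; apply/negPn/negP => uY; move/negP: nUY2; apply.
        by apply/existsP; exists u; rewrite uU uY.
      have h1 : z \in ~: K :\: Y by rewrite inE zY zK.
      have h2 : w \notin ~: K :\: Y by rewrite !inE wK andbF.
      have [a [b [aA _ bA eab]]] := crossT (subsetT (~: K :\: Y)) h1 (in_setT w) h2.
      move: aA; rewrite !inE => /andP [aY aK].
      have bK : b \notin K.
        apply/negP => bK; have aU : a \notin U by apply/negP => /UY; rewrite (negbTE aY).
        have := Kcl b a bK aU; rewrite esym => /(_ eab) aK'.
        by move: aK; rewrite aK'.
      have bY : b \in Y by move: bA; rewrite !inE bK /= andbT negbK.
      exists b, a; split => //; first by rewrite inE.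
      by rewrite esym.
  -
    have YU : forall t, t \in Y -> t \notin U.
      move=> t tY; apply/negP => tU; move/negP: nUY; apply.
      by apply/existsP; exists t; rewrite tU tY.
    have h2 : w \notin Y by apply/negP => /(subsetP sY); rewrite inE wK.
    have [a [b [aY _ bY eab]]] := crossT (subsetT Y) yY (in_setT w) h2.
    have bK : b \notin K.
      apply/negP => bK.
      have := Kcl b a bK (YU a aY); rewrite esym => /(_ eab) aK.
      by have := subsetP sY a aY; rewrite inE aK.
    by exists a, b; split => //; rewrite inE.
have deg3 : forall v, v \in K -> v != l i -> deg e v = 3%N.
  move=> v vK vi; apply: degI; apply/negP => /codomP [j Ej].
  case: (eqVneq j i) => [ji|ji]; first by move: vi; rewrite Ej ji eqxx.
  by have := hU j ji; rewrite -Ej; move: (KU v vK) => /negbTE ->.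
have Tsum : (\sum_(v in setT) deg e v = #|arcs e setT|)%N.
  rewrite degsum.
  rewrite (_ : [set p : V * V | (p.1 \in setT) && ((p.2 \notin setT) && e p.1 p.2)] = set0) ?cards0 ?addn0 //.
  by apply/setP => p; rewrite !inE.
have V0 : (0 < #|[set: V]|)%N by apply/card_gt0P; exists w.
have arcsT : #|arcs e setT| = (2 * (#|V| - 1))%N.
  have h1 := arcs_edges; have h2 := lower esym crossT V0.
  move: h1 h2; rewrite cardE cardsT; lia.
have Hsplit : (\sum_(v in setT) deg e v = \sum_(v in K) deg e v + \sum_(v in ~: K) deg e v)%N.
  by rewrite (big_setID K) setTI setTD.
have hc := degsum e (~: K).
have out1 : (0 < #|[set p : V * V | (p.1 \in ~: K) && ((p.2 \notin ~: K) && e p.1 p.2)]|)%N.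
  have wnK : w \notin ~: K by rewrite in_setC wK.
  have [a [b [aK _ bK eab]]] := crossT (subsetT (~: K)) u0K (in_setT w) wnK.
  by apply/card_gt0P; exists (a, b); rewrite inE /= aK bK eab.
have cK0 : (0 < #|~: K|)%N by apply/card_gt0P; exists (l j0).
have lowc := lower esym cK cK0.
have ccard := cardsC K.
have bound : (\sum_(v in K) deg e v <= 2 * #|K| - 1)%N.
  rewrite Hsplit hc arcsT in Tsum. move: Tsum out1 lowc ccard cK0; lia.
case: (boolP (l i \in K)) => liK.
- have E1 : (\sum_(v in K) deg e v = 1 + 3 * #|K :\ l i|)%N.
    rewrite (big_setD1 (l i) liK) degl.
    rewrite (eq_bigr (fun _ => 3%N)); last first.
      by move=> v; rewrite in_setD1 => /andP [vi vK]; apply: deg3.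
    by rewrite sum_nat_const mulnC.
  rewrite E1 (cardsD1 (l i) K) liK add1n in bound.
  have : (0 < #|K :\ l i|)%N by apply/card_gt0P; exists w; rewrite in_setD1 wi wK.
  move: bound; lia.
- have E1 : (\sum_(v in K) deg e v = 3 * #|K|)%N.
    rewrite (eq_bigr (fun _ => 3%N)); last first.
      by move=> v vK; apply: deg3 => //; apply/negP => /eqP Ev; rewrite -Ev vK in liK.
    by rewrite sum_nat_const mulnC.
  rewrite E1 in bound.
  have : (0 < #|K|)%N by apply/card_gt0P; exists w.
  move: bound; lia.
Qed.
End G2.


Section G3.
Variable V : finType.
Variable e : rel V.
Hypothesis esym : symmetric e.
Hypothesis eirr : irreflexive e.
Variable n : nat.
Variable l : 'I_n -> V.
Hypothesis connT : connected_on e setT.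
Hypothesis cardE : #|edges e| = (#|V| - 1)%N.
Hypothesis linj : injective l.
Hypothesis degl : forall i, deg e (l i) = 1%N.
Hypothesis degI : forall x, x \notin codom l -> deg e x = 3%N.
Hypothesis n3 : (3 <= n)%N.

Let KK := keyK esym eirr connT cardE degl degI n3.

Lemma allK (U : {set V}) : connected_on e U -> (forall j, l j \in U) -> forall w, w \in U.
Proof.
move=> cU hU w.
have i : 'I_n by exists 0%N; lia.
case: (eqVneq w (l i)) => [->|wi]; first exact: hU.
apply/negPn/negP => wU; exact: (KK cU (fun j _ => hU j) wU wi).
Qed.

Lemma nb1 u a b : deg e u = 1%N -> e u a -> e u b -> a = b.
Proof.
move=> /eqP /cards1P [c Hc] ua ub.
have : a \in [set y | e u y] by rewrite inE.
have : b \in [set y | e u y] by rewrite inE.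
by rewrite Hc !inE => /eqP -> /eqP ->.
Qed.

Lemma leaf_remove (U : {set V}) u : connected_on e U -> deg e u = 1%N -> connected_on e (U :\ u).
Proof.
move=> cU0 du; have cU := conn_cross esym cU0; apply: cross_conn => Y sY y z yY zU zY.
have sYU : Y \subset U by apply: subset_trans sY (subD1set _ _).
move: zU; rewrite in_setD1 => /andP [zu zU].
have [a [b [aY bU bY eab]]] := cU Y sYU y z yY zU zY.
case: (eqVneq b u) => [bu|bu]; last first.
  by exists a, b; split => //; rewrite in_setD1 bu bU.
subst b.
have sY' : u |: Y \subset U by rewrite subUset sub1set bU sYU.
have yY' : y \in u |: Y by rewrite in_setU1 yY orbT.
have zY' : z \notin u |: Y by rewrite in_setU1 negb_or zu zY.
have [a' [b' [a'Y' b'U b'Y' e']]] := cU _ sY' y z yY' zU zY'.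
move: a'Y'; rewrite in_setU1 => /orP [/eqP a'u | a'Y].
  subst a'.
  have ua : e u a by rewrite esym.
  have := nb1 du e' ua => Eb; subst b'.
  by move: b'Y'; rewrite in_setU1 aY orbT.
move: b'Y'; rewrite in_setU1 negb_or => /andP [b'u b'Y].
by exists a', b'; split => //; rewrite in_setD1 b'u b'U.
Qed.

Lemma edge_leaves E : E \in edges e -> (#|[set i | l i \in E]| <= 1)%N.
Proof.
move=> /imsetP [q]; rewrite inE => eq1 ->.
rewrite leqNgt; apply/negP => /card_gt1P [i [j [iE jE ij]]].
rewrite !inE in iE jE.
have lij : l i != l j by apply/negP => /eqP /linj /eqP; rewrite (negbTE ij).
have eij : e (l i) (l j).
  move: iE jE => /orP [/eqP Ei|/eqP Ei] /orP [/eqP Ej|/eqP Ej].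
  - by move: lij; rewrite Ei Ej eqxx.
  - by rewrite Ei Ej.
  - by rewrite Ei Ej esym.
  - by move: lij; rewrite Ei Ej eqxx.
have : (0 < #|[set~ i] :\ j|)%N.
  have := cardsD1 j [set~ i]; rewrite cardsC1 card_ord !inE eq_sym ij /=.
  move: n3; lia.
move=> /card_gt0P [k]; rewrite !inE => /andP [kj ki].
have lkA : l k \notin [set l i; l j].
  rewrite !inE negb_or; apply/andP; split; apply/negP => /eqP /linj /eqP.
  - by rewrite (negbTE ki).
  - by rewrite (negbTE kj).
have liA : l i \in [set l i; l j] by rewrite !inE eqxx.
have [a [b [aA _ bA eab]]] := crossT esym connT (subsetT [set l i; l j]) liA (in_setT (l k)) lkA.
move: aA => /set2P [Ea|Ea]; subst a.
- by have := nb1 (degl i) eab eij => Eb; rewrite Eb !inE eqxx orbT in bA.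
- have eji : e (l j) (l i) by rewrite esym.
  by have := nb1 (degl j) eab eji => Eb; rewrite Eb !inE eqxx in bA.
Qed.

Lemma min_leaf (S : {set 'I_n}) (U : {set V}) j : min_span e l S U -> l j \in U -> j \in S.
Proof.
rewrite /min_span => /andP [/andP [sub cU] /forallP mn] ljU.
apply/negPn/negP => jS.
have sp : spans e l S (U :\ l j).
  rewrite /spans leaf_remove ?degl // andbT.
  apply/subsetP => x /imsetP [i iS ->]; rewrite in_setD1.
  have ij : i != j by apply/negP => /eqP Eij; rewrite -Eij iS in jS.
  have -> : l i != l j by apply/negP => /eqP /linj /eqP; rewrite (negbTE ij).
  by rewrite (subsetP sub) // imset_f.
have := implyP (mn (U :\ l j)) sp => /subsetP /(_ _ ljU).
by rewrite in_setD1 eqxx.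
Qed.

End G3.


Local Open Scope ring_scope.
Section G4.
Variable V : finType.
Variable e : rel V.
Hypothesis esym : symmetric e.
Hypothesis eirr : irreflexive e.
Variable n : nat.
Variable l : 'I_n -> V.
Hypothesis connT : connected_on e setT.
Hypothesis cardE : #|edges e| = (#|V| - 1)%N.
Hypothesis linj : injective l.
Hypothesis degl : forall i, deg e (l i) = 1%N.
Hypothesis degI : forall x, x \notin codom l -> deg e x = 3%N.
Hypothesis n3 : (3 <= n)%N.
Variable R : realFieldType.
Variable wt : {set V} -> R.
Hypothesis hwt : forall E, E \in edges e -> 0 <= wt E.

Let KK := keyK esym eirr connT cardE degl degI n3.
Let AK := allK esym eirr connT cardE degl degI n3.

Definition Etot := \sum_(E in edges e) wt E.

Lemma vN : tree_game e l wt setT = Etot.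
Proof.
have allsp : forall U, spans e l setT U -> U = setT.
  move=> U /andP [sub cU]; apply/setP => w; rewrite inE; apply: (AK cU) => j.
  by rewrite (subsetP sub) // imset_f.
rewrite /tree_game; case: pickP => [U /andP [HU _] | H0].
  rewrite (allsp U HU); apply: eq_bigl => E; by rewrite subsetT andbT.
have : min_span e l setT setT.
  rewrite /min_span /spans subsetT connT /=; apply/forallP => U'; apply/implyP => sp.
  by rewrite (allsp U' sp).
by rewrite H0.
Qed.

Lemma vNi i : Etot - leaf_weight e l wt i <= tree_game e l wt (setT :\ i).
Proof.
have hsub : forall U, spans e l (setT :\ i) U -> forall w, w != l i -> w \in U.
  move=> U /andP [sub cU] w wi; apply/negPn/negP => wU.
  apply: (KK cU _ wU wi) => j ji.
  by rewrite (subsetP sub) // imset_f // in_setD1 ji in_setT.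
have -> : Etot - leaf_weight e l wt i = \sum_(E in edges e | l i \notin E) wt E.
  by rewrite /Etot [X in X - _](bigID (fun E : {set V} => l i \in E)) /= addrC addrK.
rewrite /tree_game; case: pickP => [U /andP [HU _] | H0].
  rewrite big_mkcondr [X in _ <= X]big_mkcondr /=; apply: ler_sum => E EE.
  case: (boolP (l i \in E)) => liE /=.
    by case: ifP => _ //; apply: hwt.
  have -> : E \subset U.
    apply/subsetP => w wE; apply: (hsub U HU); apply/negP => /eqP Ew.
    by rewrite -Ew wE in liE.
  by [].
have : min_span e l (setT :\ i) (setT :\ l i).
  have cc : connected_on e (setT :\ l i) by apply: leaf_remove => //; apply: degl.
  rewrite /min_span /spans cc andbT.
  apply/andP; split.
    apply/subsetP => x /imsetP [j jD ->]; rewrite in_setD1 in jD; move: jD => /andP [ji _].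
    rewrite in_setD1 in_setT andbT; apply/negP => /eqP /linj /eqP.
    by rewrite (negbTE ji).
  apply/forallP => U'; apply/implyP => sp; apply/subsetP => w.
  rewrite in_setD1 => /andP [wi _]; exact: hsub.
by rewrite H0.
Qed.

Lemma sum_alpha (S : {set 'I_n}) :
  \sum_(i in S) leaf_weight e l wt i = \sum_(E in edges e) wt E *+ #|[set i in S | l i \in E]|.
Proof.
rewrite /leaf_weight (exchange_big_dep (fun E => E \in edges e)) /=; last first.
  by move=> i E _ /andP [].
apply: eq_bigr => E EE; rewrite -sumr_const; apply: eq_bigl => i.
by rewrite !inE EE.
Qed.


Lemma alpha_ge0 i : 0 <= leaf_weight e l wt i.
Proof. by apply: sumr_ge0 => E /andP [Ee _]; apply: hwt. Qed.

Lemma core_le x i : in_core (tree_game e l wt) x -> x i <= leaf_weight e l wt i.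
Proof.
move=> [c1 c2]; have h := c1 (setT :\ i); have h2 := vNi i.
have hs : \sum_(j < n) x j = x i + \sum_(j in setT :\ i) x j.
  rewrite (bigD1 i) //=; congr (_ + _); apply: eq_bigl => j; by rewrite in_setD1 in_setT andbT.
rewrite vN hs in c2.
lra.
Qed.

Lemma c_le1 E (S : {set 'I_n}) : E \in edges e -> (#|[set i in S | l i \in E]| <= 1)%N.
Proof.
move=> Ee; apply: leq_trans (edge_leaves esym connT cardE linj degl n3 Ee).
by apply: subset_leq_card; apply/subsetP => i; rewrite !inE => /andP [].
Qed.

Lemma sum_alphaT : \sum_(i < n) leaf_weight e l wt i =
  \sum_(E in edges e) wt E *+ #|[set i in [set: 'I_n] | l i \in E]|.
Proof.
rewrite -sum_alpha; apply: eq_bigl => i; by rewrite in_setT.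
Qed.

Lemma part2 : (exists E, internal_edge e l E /\ 0 < wt E) ->
     forall x : 'I_n -> R, ~ in_core (tree_game e l wt) x.
Proof.
move=> [E0 [/andP [E0e /forallP E0i] pos]] x core.
have hx := fun i => core_le i core.
have c2 := core.2; rewrite vN in c2.
have s1 : \sum_(i < n) x i <= \sum_(i < n) leaf_weight e l wt i by apply: ler_sum => i _.
have s3 : \sum_(E in edges e) wt E *+ #|[set i in [set: 'I_n] | l i \in E]| + wt E0 <= Etot.
  rewrite /Etot [X in X + _ <= _](bigD1 E0) // [X in _ <= X](bigD1 E0) //=.
  have -> : [set i in [set: 'I_n] | l i \in E0] = set0.
    by apply/setP => i; rewrite !inE (negbTE (E0i i)).
  rewrite cards0 mulr0n add0r addrC lerD2r; apply: ler_sum => E /andP [Ee _].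
  rewrite -[X in _ <= X]mulr1n; apply: ler_wpMn2l; first exact: hwt.
  exact: c_le1.
rewrite sum_alphaT in s1.
lra.
Qed.

Lemma part1 : (forall E, internal_edge e l E -> wt E = 0) ->
     forall x : 'I_n -> R,
       in_core (tree_game e l wt) x <-> x =1 leaf_weight e l wt.
Proof.
move=> hint.
have sa : \sum_(i < n) leaf_weight e l wt i = Etot.
  rewrite sum_alphaT; apply: eq_bigr => E Ee.
  case: (boolP [forall i, l i \notin E]) => h.
    by rewrite hint ?mul0rn // /internal_edge Ee h.
  move/forallPn: h => [i]; rewrite negbK => liE.
  have c1 : (0 < #|[set i in [set: 'I_n] | l i \in E]|)%N.
    by apply/card_gt0P; exists i; rewrite !inE liE.
  have c2 := c_le1 [set: 'I_n] Ee.
  have -> : #|[set i in [set: 'I_n] | l i \in E]| = 1%N by apply/eqP; rewrite eqn_leq c2 c1.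
  by rewrite mulr1n.
move=> x; split.
- move=> core i; have hx := fun i => core_le i core.
  have c2 := core.2; rewrite vN in c2.
  have s0 : \sum_(j < n) (leaf_weight e l wt j - x j) = 0.
    by rewrite sumrB sa c2 subrr.
  have nn : forall j, predT j -> 0 <= leaf_weight e l wt j - x j.
    by move=> j _; rewrite subr_ge0; apply: hx.
  have := psumr_eq0P nn s0 (i := i) isT.
  by move/eqP; rewrite subr_eq0 => /eqP ->.
- move=> Ex; split.
  + move=> S; rewrite (eq_bigr _ (fun i _ => Ex i)) sum_alpha.
    rewrite /tree_game; case: pickP => [U HU|_].
    * rewrite big_mkcondr /=; apply: ler_sum => E Ee.
      case: ifP => EU; last exact: mulrn_wge0 (hwt Ee).
      case: (boolP [forall i, l i \notin E]) => h.
        by rewrite hint ?mul0rn // /internal_edge Ee h.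
      move/forallPn: h => [i]; rewrite negbK => liE.
      have iS := min_leaf esym linj degl HU (subsetP EU _ liE).
      have c1 : (0 < #|[set i in S | l i \in E]|)%N.
        by apply/card_gt0P; exists i; rewrite !inE liE iS.
      rewrite -[X in X <= _]mulr1n; apply: ler_wpMn2l => //; exact: hwt.
    * by apply: sumr_ge0 => E Ee; apply: mulrn_wge0; apply: hwt.
  + rewrite vN -sa; apply: eq_bigr => i _; exact: Ex.
Qed.

End G4.


End TreeAux.
Import TreeAux.

Local Open Scope ring_scope.

Theorem theorem12 (R : realFieldType) (n : nat) (V : finType) (e : rel V)
  (l : 'I_n -> V) (wt : {set V} -> R) :
  (3 <= n)%N ->
  leaf_tree e l ->
  (forall E, E \in edges e -> 0 <= wt E) ->
  ((forall E, internal_edge e l E -> wt E = 0) ->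
     forall x : 'I_n -> R,
       in_core (tree_game e l wt) x <-> x =1 leaf_weight e l wt) /\
  ((exists E, internal_edge e l E /\ 0 < wt E) ->
     forall x : 'I_n -> R, ~ in_core (tree_game e l wt) x).
Proof.
move=> n3 [[esym eirr connT cardE] linj degl degI] hwt.
split; [apply: part1 | apply: part2] => //.
Qed.
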